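(* For positive integers $n$, $k$ and $r$, \[S_{\leq m}(n,k,r)=(k-1)!\binom{k+r-1}{k-1}{n\brace k+r-1}_{\leq m}.\]
   Context: $S_{\leq m}(n,k,r)$ (mixed restricted Stirling number of the second kind) is the number of ways to distribute the elements of $[n]$ into non-empty cells, where there are $r$ cells carrying the label $1$ (indistinguishable among themselves) and one cell each with labels $2,\dots,k$, such that every cell contains at most $m$ elements. ${n\brace k}_{\leq m}$ is the number of partitions of $[n]$ into $k$ non-empty blocks each of size at most $m$. *)

(* Defs.v *)
From mathcomp Require Import all_boot.
Set Implicit Arguments. Unset Strict Implicit. Unset Printing Implicit Defensive.

Definition stirling2_le (n k m : nat) : nat :=
  #|[set P : {set {set 'I_n}} |
      [&& partition P [set: 'I_n], #|P| == k & [forall B in P, #|B| <= m]]]|.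

(* S_{<= m}(n,k,r): distributions of [n] into r indistinguishable cells with
   label 1 and one cell each with labels 2..k, all cells non-empty of size
   at most m.  Encoding: g : 'I_n -> 'I_k assigns each element a label
   (label 1 is encoded by 0, label j+1 by j); Q is the set partition of the
   elements with label 1 into the r (indistinguishable, non-empty) cells. *)
Definition mixed_stirling_le (n k r m : nat) : nat :=
  #|[set gQ : {ffun 'I_n -> 'I_k} * {set {set 'I_n}} |
      [&& partition gQ.2 [set x | nat_of_ord (gQ.1 x) == 0],
          #|gQ.2| == r,
          [forall B in gQ.2, #|B| <= m] &
          [forall j : 'I_k, (nat_of_ord j != 0) ==>
              (0 < #|gQ.1 @^-1: [set j]| <= m)]]]|.

(* Main.v *)
Require Import Defs.
From mathcomp Require Import all_boot.
Set Implicit Arguments. Unset Strict Implicit. Unset Printing Implicit Defensive.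
Lemma partP (T : finType) (P : {set {set T}}) (D : {set T}) :
  partition P D <->
  [/\ set0 \notin P, (forall B, B \in P -> B \subset D),
      (forall x, x \in D -> exists2 B, B \in P & x \in B) &
      (forall B1 B2 x, B1 \in P -> B2 \in P -> x \in B1 -> x \in B2 -> B1 = B2)].
Proof.
split.
- case/and3P => /eqP cP /trivIsetP tP P0; split => //.
  + by move=> B BP; rewrite -cP; apply: bigcup_sup.
  + by move=> x; rewrite -cP => /bigcupP[B BP xB]; exists B.
  + move=> B1 B2 x B1P B2P x1 x2; case: (eqVneq B1 B2) => // ne.
    by rewrite (disjointFr (tP _ _ B1P B2P ne) x1) in x2.
- case=> P0 sub cov uniq; apply/and3P; split => //.
  + rewrite eqEsubset; apply/andP; split; first by apply/bigcupsP.
    by apply/subsetP => x /cov [B BP xB]; apply/bigcupP; exists B.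
  + apply/trivIsetP => B1 B2 B1P B2P ne; rewrite disjoint_subset; apply/subsetP => x x1; rewrite !inE; apply/negP => x2.
    by move/eqP: ne; apply; apply: uniq x1 x2.
Qed.

Lemma ex_lift k' (j : 'I_k'.+1) : nat_of_ord j != 0 -> exists i : 'I_k', j = lift ord0 i.
Proof. by case: (unliftP ord0 j) => [i ->|->]; [exists i|]. Qed.

Section Main.
Variables (n k' r m : nat).
Notation G := {ffun 'I_n -> 'I_k'.+1}.
Notation FF := {ffun 'I_k' -> {set 'I_n}}.
Notation SS := {set {set 'I_n}}.

Definition Lset := [set gQ : G * SS |
      [&& partition gQ.2 [set x | nat_of_ord (gQ.1 x) == 0],
          #|gQ.2| == r,
          [forall B in gQ.2, #|B| <= m] &
          [forall j : 'I_k'.+1, (nat_of_ord j != 0) ==>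
              (0 < #|gQ.1 @^-1: [set j]| <= m)]]].
Definition Sset := [set P : SS |
      [&& partition P [set: 'I_n], #|P| == k' + r & [forall B in P, #|B| <= m]]].
Definition Tset := [set y : SS * FF |
      [&& y.1 \in Sset, y.2 \in ffun_on y.1 & injectiveb y.2]].

Definition blk (g : G) : FF := [ffun i => g @^-1: [set lift ord0 i]].
Definition Phi (x : G * SS) : SS * FF := (x.2 :|: [set blk x.1 i | i : 'I_k'], blk x.1).
Definition gof (F : FF) : G :=
  [ffun x => if [pick i | x \in F i] is Some i then lift ord0 i else ord0].
Definition Psi (y : SS * FF) : G * SS := (gof y.2, y.1 :\: [set y.2 i | i : 'I_k']).

Lemma in_blk g i x : (x \in blk g i) = (g x == lift ord0 i).
Proof. by rewrite ffunE !inE. Qed.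

Lemma Lfacts g Q : (g, Q) \in Lset ->
  [/\ partition Q [set x | nat_of_ord (g x) == 0], #|Q| = r,
      (forall B, B \in Q -> #|B| <= m),
      (forall i, blk g i != set0) & (forall i, #|blk g i| <= m)].
Proof.
rewrite inE /= => /and4P[pQ /eqP cQ /forall_inP bQ /forallP fib]; split => // i.
- have := fib (lift ord0 i); rewrite lift0 /= => /andP[].
  by rewrite card_gt0 ffunE.
- have := fib (lift ord0 i); rewrite lift0 /= => /andP[].
  by rewrite ffunE.
Qed.

Lemma blk_inj g Q : (g, Q) \in Lset -> injective (blk g).
Proof.
move=> /Lfacts[_ _ _ ne _] i j eqij.
have /set0Pn[x xi] := ne i.
have xj : x \in blk g j by rewrite -eqij.
by move: xi xj; rewrite !in_blk => /eqP -> /eqP /lift_inj.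
Qed.

Lemma blk_notQ g Q i : (g, Q) \in Lset -> blk g i \notin Q.
Proof.
move=> L; have [/partP[_ sub _ _] _ _ ne _] := Lfacts L.
apply/negP => /sub /subsetP sb.
have /set0Pn[x xi] := ne i.
by have := sb _ xi; rewrite inE; move: xi; rewrite in_blk => /eqP ->.
Qed.

Lemma L1 x : x \in Lset -> Phi x \in Tset.
Proof.
case: x => g Q L; have [pQ cQ bQ ne bm] := Lfacts L.
have [Q0 sub cov uni] := (partP _ _).1 pQ.
rewrite inE /=; apply/and3P; split; last first.
- by apply/injectiveP; apply: blk_inj L.
- by apply/ffun_onP => i; rewrite inE; apply/orP; right; apply: imset_f.
rewrite inE; apply/and3P; split.
- apply/partP; split.
  + rewrite inE negb_or Q0 /=; apply/imsetP => -[i _ /esym/eqP].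
    by rewrite (negbTE (ne i)).
  + by move=> *; apply: subsetT.
  + move=> x _; case: (boolP (nat_of_ord (g x) == 0)) => [z|nz].
      have [B BQ xB] : exists2 B, B \in Q & x \in B by apply: cov; rewrite inE.
      by exists B => //; rewrite inE BQ.
    have [i gi] := ex_lift nz; exists (blk g i); last by rewrite in_blk gi.
    by rewrite inE; apply/orP; right; apply: imset_f.
  + move=> B1 B2 x; rewrite !inE => /orP[B1Q|/imsetP[i _ ->]] /orP[B2Q|/imsetP[j _ ->]].
    * exact: uni.
    * move=> xB1; rewrite in_blk => /eqP gx.
      by have := subsetP (sub _ B1Q) _ xB1; rewrite inE gx.
    * rewrite in_blk => /eqP gx xB2.
      by have := subsetP (sub _ B2Q) _ xB2; rewrite inE gx.
    * by rewrite !in_blk => /eqP -> /eqP /lift_inj ->.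
- have I0 : Q :&: [set blk g i | i : 'I_k'] = set0.
    apply/setP => B; rewrite !inE; apply/negP => /andP[BQ /imsetP[i _ eB]].
    by have := blk_notQ i L; rewrite -eB BQ.
  have := cardsUI Q [set blk g i | i : 'I_k']; rewrite I0 cards0 addn0 => ->.
  rewrite cQ card_imset ?card_ord 1?addnC //; apply: blk_inj L.
- apply/forall_inP => B; rewrite inE => /orP[/bQ //|/imsetP[i _ ->]]; exact: bm.
Qed.


Lemma gof0 (F : FF) x : (nat_of_ord (gof F x) == 0) = [forall i, x \notin F i].
Proof.
rewrite ffunE; case: pickP => [j xj|none].
  by rewrite lift0 /=; symmetry; apply/forallP => /(_ j); rewrite xj.
by symmetry; apply/forallP => i; rewrite none.
Qed.

Lemma Tfacts P F : (P, F) \in Tset ->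
  [/\ partition P [set: 'I_n], #|P| = k' + r, (forall B, B \in P -> #|B| <= m),
      (forall i, F i \in P) & injective F].
Proof.
rewrite !inE /= => /and3P[/and3P[pP /eqP cP /forall_inP bP] /ffun_onP fP /injectiveP iF].
by split.
Qed.

Lemma gofE P F x i : (P, F) \in Tset -> x \in F i -> gof F x = lift ord0 i.
Proof.
move=> /Tfacts[/partP[_ _ _ uni] _ _ fP iF] xi.
rewrite ffunE; case: pickP => [j xj|none]; last by rewrite none in xi.
by rewrite (iF _ _ (uni _ _ _ (fP j) (fP i) xj xi)).
Qed.

Lemma blk_gof P F : (P, F) \in Tset -> blk (gof F) = F.
Proof.
move=> T; apply/ffunP => i; apply/setP => x; rewrite in_blk.
case: (boolP (x \in F i)) => [xi|nxi]; first by rewrite (gofE T xi) eqxx.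
apply/negbTE; rewrite ffunE; case: pickP => [j xj|none].
  by apply/negP => /eqP /lift_inj ej; rewrite -ej xj in nxi.
by apply/negP => /eqP/(congr1 val).
Qed.

Lemma L2 y : y \in Tset -> Psi y \in Lset.
Proof.
case: y => P F T; have [pP cP bP fP iF] := Tfacts T.
have [P0 _ cov uni] := (partP _ _).1 pP.
have imP : [set F i | i : 'I_k'] \subset P.
  by apply/subsetP => B /imsetP[i _ ->].
rewrite inE /=; apply/and4P; split.
- apply/partP; split.
  + by apply/negP; rewrite inE => /andP[_]; rewrite (negbTE P0).
  + move=> B; rewrite inE => /andP[nB BP]; apply/subsetP => x xB.
    rewrite inE gof0; apply/forallP => i; apply/negP => xi.
    by move/negP: nB; apply; rewrite (uni _ _ _ BP (fP i) xB xi) imset_f.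
  + move=> x; rewrite inE gof0 => /forallP nx.
    have [B BP xB] := cov x (in_setT x); exists B => //.
    rewrite inE BP andbT; apply/imsetP => -[i _ eB].
    by have := nx i; rewrite -eB xB.
  + move=> B1 B2 x; rewrite !inE => /andP[_ B1P] /andP[_ B2P]; exact: uni.
- rewrite cardsD (setIidPr imP) card_imset // card_ord cP.
  by rewrite addKn.
- apply/forall_inP => B; rewrite inE => /andP[_]; exact: bP.
- apply/forallP => j; apply/implyP => /ex_lift[i ->].
  have -> : gof F @^-1: [set lift ord0 i] = F i.
    by have := congr1 (fun f : FF => f i) (blk_gof T); rewrite /blk ffunE.
  rewrite bP // andbT card_gt0; apply/negP => /eqP Fi0.
  by have := fP i; rewrite Fi0 (negbTE P0).
Qed.

Lemma L3 x : x \in Lset -> Psi (Phi x) = x.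
Proof.
case: x => g Q L; rewrite /Psi /Phi /=; congr pair.
- apply/ffunP => x; rewrite ffunE; case: pickP => [i|none].
    by rewrite in_blk => /eqP.
  case: (boolP (nat_of_ord (g x) == 0)) => [/eqP z|nz].
    by apply/val_inj; rewrite /= z.
  by have [i gi] := ex_lift nz; have := none i; rewrite in_blk gi eqxx.
- apply/setP => B; rewrite !inE; case: (boolP (B \in Q)) => BQ; last first.
    rewrite orFb; case: (B \in _) => //.
  rewrite orTb andbT; apply/imsetP => -[i _ eB].
  by have := blk_notQ i L; rewrite -eB BQ.
Qed.

Lemma L4 y : y \in Tset -> Phi (Psi y) = y.
Proof.
case: y => P F T; have [_ _ _ fP _] := Tfacts T.
rewrite /Psi /Phi /= (blk_gof T); congr pair.
apply/setP => B; rewrite !inE; case: (boolP (B \in [set F i | i : 'I_k'])).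
  by move=> /imsetP[i _ ->]; rewrite orbT fP.
by rewrite /= orbF.
Qed.

Lemma cardLT : #|Lset| = #|Tset|.
Proof.
rewrite -(card_in_imset (f := Phi) (D := Lset)); last first.
  by move=> x1 x2 L1' L2' e; rewrite -(L3 L1') -(L3 L2') e.
apply: eq_card => y; apply/imsetP/idP => [[x xL ->]|yT].
  exact: L1.
by exists (Psi y); [apply: L2 | rewrite L4].
Qed.

Lemma cardT : #|Tset| = #|Sset| * (k' + r) ^_ k'.
Proof.
rewrite -sum_nat_const -sum1_card.
rewrite (eq_bigl (fun y : SS * FF => (y.1 \in Sset) && ((y.2 \in ffun_on y.1) && injectiveb y.2))); last first.
  by move=> y; rewrite inE.
rewrite -(pair_big_dep (fun P : SS => P \in Sset) (fun P (F : FF) => (F \in ffun_on P) && injectiveb F) (fun _ _ => 1)) /=.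
apply: eq_bigr => P PS; rewrite sum1_card.
have := card_inj_ffuns_on 'I_k' (mem P); rewrite card_ord.
move: PS; rewrite inE => /and3P[_ /eqP -> _] <-.
by apply: eq_card => F; rewrite inE.
Qed.

End Main.

Theorem mainTheorem12 (n k r m : nat) :
  0 < n -> 0 < k -> 0 < r ->
  mixed_stirling_le n k r m =
    (k - 1)`! * 'C(k + r - 1, k - 1) * stirling2_le n (k + r - 1) m.
Proof.
move=> _ k0 _; case: k k0 => [//|k'] _.
have -> : k'.+1 + r - 1 = k' + r by rewrite addSn subn1.
have -> : k'.+1 - 1 = k' by rewrite subn1.
change (#|Lset n k' r m| = k'`! * 'C(k' + r, k') * #|Sset n k' r m|).
rewrite cardLT cardT -bin_ffact mulnC (mulnC k'`!).
by [].
Qed.
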